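(* If the two-player two-action game is symmetric, i.e. its payoff table is: (action 1, action 1) gives $a/a$, (action 1, action 2) gives $b/c$, (action 2, action 1) gives $c/b$, (action 2, action 2) gives $d/d$ (first number the row player's payoff, second the column player's), then the unconstrained SA-IGA self-play dynamics $\dot x=F(x)$ on $x=(p_1,p_2,w_1,w_2)\in\mathbb{R}^4$ is linear, i.e. $F$ is an affine function of $(p_1,p_2,w_1,w_2)$.
   Context: Two players $i\in\{1,2\}$, each with actions $1,2$; $r_i^{jk}$ is the payoff of player $i$ when player $i$ plays action $j$ and its opponent $-i$ plays action $k$ (so for the symmetric game $r_i^{11}=a$, $r_i^{12}=b$, $r_i^{21}=c$, $r_i^{22}=d$ for both $i$). Player $i$'s mixed strategy is given by $p_i\in[0,1]$, its probability of playing action 1. The expected payoff of player $i$ is $V_i(p_1,p_2)=\sum_{j,k}\pi_i(j)\pi_{-i}(k)r_i^{jk}$ with $\pi_i(1)=p_i,\ \pi_i(2)=1-p_i$. The social payoff is $V^{soc}=\frac{1}{2}(V_1+V_2)$. Each player $i$ has a social attitude $w_i\in[0,1]$ and overall payoff $\tilde V_i=(1-w_i)V_i+w_iV^{soc}$. The unconstrained SA-IGA dynamics (both players using SA-IGA) is the system $\dot p_i=\frac{\partial \tilde V_i}{\partial p_i}$ (partial derivative with respect to the player's own $p_i$, all other variables fixed), $\dot w_i=\varepsilon\,(V_i-V^{soc})$, $i\in\{1,2\}$, where $\varepsilon>0$ is a constant. Write this as $\dot x=F(x)$ with $x=(p_1,p_2,w_1,w_2)$. *)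

(* Defs.v *)
From Stdlib Require Import Reals.
From Coquelicot Require Import Coquelicot.
Open Scope R_scope.

(* Payoff table: r i j k = payoff of player i (i = 1,2) when it plays
   action j (j = 1,2) and its opponent plays action k (k = 1,2). *)
Definition payoff := nat -> nat -> nat -> R.

Definition pi (p : R) (j : nat) : R := if Nat.eqb j 1 then p else 1 - p.

Definition Vpl (r : payoff) (i : nat) (pown popp : R) : R :=
  pi pown 1 * pi popp 1 * r i 1%nat 1%nat
  + pi pown 1 * pi popp 2 * r i 1%nat 2%nat
  + pi pown 2 * pi popp 1 * r i 2%nat 1%nat
  + pi pown 2 * pi popp 2 * r i 2%nat 2%nat.

Definition V1 (r : payoff) (p1 p2 : R) : R := Vpl r 1 p1 p2.
Definition V2 (r : payoff) (p1 p2 : R) : R := Vpl r 2 p2 p1.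
Definition Vsoc (r : payoff) (p1 p2 : R) : R := (V1 r p1 p2 + V2 r p1 p2) / 2.

Definition tV1 (r : payoff) (p1 p2 w1 : R) : R :=
  (1 - w1) * V1 r p1 p2 + w1 * Vsoc r p1 p2.
Definition tV2 (r : payoff) (p1 p2 w2 : R) : R :=
  (1 - w2) * V2 r p1 p2 + w2 * Vsoc r p1 p2.

Definition F (r : payoff) (eps : R) (k : nat) (p1 p2 w1 w2 : R) : R :=
  match k with
  | 1%nat => Derive (fun q => tV1 r q p2 w1) p1
  | 2%nat => Derive (fun q => tV2 r p1 q w2) p2
  | 3%nat => eps * (V1 r p1 p2 - Vsoc r p1 p2)
  | _ => eps * (V2 r p1 p2 - Vsoc r p1 p2)
  end.

Definition symmetric_game (r : payoff) (a b c d : R) : Prop :=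
  forall i : nat, (i = 1%nat \/ i = 2%nat) ->
    r i 1%nat 1%nat = a /\ r i 1%nat 2%nat = b /\
    r i 2%nat 1%nat = c /\ r i 2%nat 2%nat = d.

(* Main.v *)
Require Import Defs.
From Stdlib Require Import Reals Lra Lia.
From Coquelicot Require Import Coquelicot.
Open Scope R_scope.

Theorem theorem2 (r : payoff) (a b c d eps : R) :
  0 < eps -> symmetric_game r a b c d ->
  exists (A : nat -> nat -> R) (c0 : nat -> R),
    forall (k : nat) (p1 p2 w1 w2 : R), (1 <= k <= 4)%nat ->
      F r eps k p1 p2 w1 w2
      = c0 k + A k 1%nat * p1 + A k 2%nat * p2 + A k 3%nat * w1 + A k 4%nat * w2.
Proof.
  intros _ Hs.
  destruct (Hs 1%nat (or_introl eq_refl)) as [H1a [H1b [H1c H1d]]].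
  destruct (Hs 2%nat (or_intror eq_refl)) as [H2a [H2b [H2c H2d]]].
  exists (fun k j => match k, j with
    | 1%nat, 2%nat => a-b-c+d
    | 1%nat, 3%nat => (c-b)/2
    | 2%nat, 1%nat => a-b-c+d
    | 2%nat, 4%nat => (c-b)/2
    | 3%nat, 1%nat => eps*(b-c)/2
    | 3%nat, 2%nat => - (eps*(b-c)/2)
    | 4%nat, 1%nat => - (eps*(b-c)/2)
    | 4%nat, 2%nat => eps*(b-c)/2
    | _, _ => 0 end).
  exists (fun k => match k with 1%nat | 2%nat => b - d | _ => 0 end).
  intros k p1 p2 w1 w2 Hk.
  destruct k as [|[|[|[|[|k]]]]]; try lia; unfold F.
  - apply is_derive_unique.
    unfold tV1, Vsoc, V1, V2, Vpl, pi; simpl.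
    rewrite H1a, H1b, H1c, H1d, H2a, H2b, H2c, H2d.
    auto_derive; [auto| field].
  - apply is_derive_unique.
    unfold tV2, Vsoc, V1, V2, Vpl, pi; simpl.
    rewrite H1a, H1b, H1c, H1d, H2a, H2b, H2c, H2d.
    auto_derive; [auto| field].
  - unfold Vsoc, V1, V2, Vpl, pi; simpl.
    rewrite H1a, H1b, H1c, H1d, H2a, H2b, H2c, H2d. field.
  - unfold Vsoc, V1, V2, Vpl, pi; simpl.
    rewrite H1a, H1b, H1c, H1d, H2a, H2b, H2c, H2d. field.
Qed.
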